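(* Let $\alpha$ be an infinite ordinal, $V={}^\alpha\alpha^{(Id)}$, and let $\mathfrak B$ be a subalgebra of $\wp(V)=\langle\mathcal P(V);\cap,-,S^i_j,S_{ij}\rangle_{i\neq j<\alpha}$. Then there exist a set $M$, an injection $\epsilon:\alpha\to M$, a subalgebra $\mathfrak C$ of the full set algebra $\langle\mathcal P({}^\alpha M);\cap,-,S^i_j,S_{ij}\rangle_{i\neq j<\alpha}$ and an isomorphism $g:\mathfrak B\to\mathfrak C$ such that $g(X)\cap\{\epsilon\circ s:s\in V\}=\{\epsilon\circ s:s\in X\}$ for every $X\in B$ (i.e. $g$ is a strong sub-base-isomorphism).
   Context: ${}^\alpha\alpha^{(Id)}=\{s\in{}^\alpha\alpha:|\{i<\alpha:s_i\neq i\}|<\omega\}$. For $i\neq j<\alpha$, $[i,j]$ is the transposition swapping $i,j$ and $[i/j]:\alpha\to\alpha$ sends $i$ to $j$ and fixes all other points. For a set $W$ of $\alpha$-sequences closed under $s\mapsto s\circ[i,j]$ and $s\mapsto s\circ[i/j]$, the algebra on $\mathcal P(W)$ has complement relative to $W$, $S^i_j(X)=\{q\in W:q\circ[i/j]\in X\}$ and $S_{ij}(X)=\{q\in W:q\circ[i,j]\in X\}$. *)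

(* Defs.v *)
From Stdlib Require Import List Classical ClassicalDescription
  FunctionalExtensionality PropExtensionality.

Definition swap {A : Type} (i j k : A) : A :=
  if excluded_middle_informative (k = i) then j
  else if excluded_middle_informative (k = j) then i else k.

Definition repl {A : Type} (i j k : A) : A :=
  if excluded_middle_informative (k = i) then j else k.

Definition infinite_type (A : Type) : Prop :=
  ~ exists l : list A, forall x, In x l.

(* s differs from the identity in only finitely many places:
   membership in  ^alpha alpha^(Id) *)
Definition fin_supp {A : Type} (s : A -> A) : Prop :=
  exists l : list A, forall i, s i <> i -> In i l.

Definition setI {T : Type} (X Y : T -> Prop) : T -> Prop :=
  fun q => X q /\ Y q.
Definition setCrel {T : Type} (W X : T -> Prop) : T -> Prop :=
  fun q => W q /\ ~ X q.
Definition Srepl {A M : Type} (W : (A -> M) -> Prop) (i j : A)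
  (X : (A -> M) -> Prop) : (A -> M) -> Prop :=
  fun q => W q /\ X (fun k => q (repl i j k)).
Definition Sswap {A M : Type} (W : (A -> M) -> Prop) (i j : A)
  (X : (A -> M) -> Prop) : (A -> M) -> Prop :=
  fun q => W q /\ X (fun k => q (swap i j k)).

Definition subalgebra {A M : Type} (W : (A -> M) -> Prop)
  (B : ((A -> M) -> Prop) -> Prop) : Prop :=
  (forall X, B X -> forall q, X q -> W q) /\
  (forall X Y, B X -> B Y -> B (setI X Y)) /\
  (forall X, B X -> B (setCrel W X)) /\
  (forall i j, i <> j -> forall X, B X -> B (Srepl W i j X)) /\
  (forall i j, i <> j -> forall X, B X -> B (Sswap W i j X)).

Definition is_iso {A M N : Type} (W1 : (A -> M) -> Prop) (W2 : (A -> N) -> Prop)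
  (B : ((A -> M) -> Prop) -> Prop) (C : ((A -> N) -> Prop) -> Prop)
  (g : ((A -> M) -> Prop) -> ((A -> N) -> Prop)) : Prop :=
  (forall X, B X -> C (g X)) /\
  (forall X Y, B X -> B Y -> g X = g Y -> X = Y) /\
  (forall Y, C Y -> exists X, B X /\ g X = Y) /\
  (forall X Y, B X -> B Y -> g (setI X Y) = setI (g X) (g Y)) /\
  (forall X, B X -> g (setCrel W1 X) = setCrel W2 (g X)) /\
  (forall i j, i <> j -> forall X, B X -> g (Srepl W1 i j X) = Srepl W2 i j (g X)) /\
  (forall i j, i <> j -> forall X, B X -> g (Sswap W1 i j X) = Sswap W2 i j (g X)).

(* Main.v *)
Require Import Defs.
From Stdlib Require Import List Classical ClassicalDescription
  FunctionalExtensionality PropExtensionality.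
From mathcomp Require ssreflect ssrbool ssrfun eqtype ssrnat seq all_boot classical_sets filter.
Module UF.
Import ssreflect ssrbool ssrfun eqtype ssrnat seq classical_sets filter.
Lemma ultra_ex (A : Type) : exists U : (list A -> Prop) -> Prop,
  (forall P Q, U P -> U Q -> U (fun x => P x /\ Q x)) /\
  (forall P Q : list A -> Prop, (forall x, P x -> Q x) -> U P -> U Q) /\
  (forall P, U P \/ U (fun x => ~ P x)) /\
  (forall P, U P -> exists x, P x) /\
  (forall l : list A, U (fun G => forall a, List.In a l -> List.In a G)).
Proof.
pose F0 : set_system (list A) := fun P => exists l, forall G,
  (forall a, List.In a l -> List.In a G) -> P G.
have FF : ProperFilter F0.
  split.
  - move=> [l Hl]; exact: (Hl l (fun a h => h)).
  - split.
    + by exists nil.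
    + move=> P Q [l1 H1] [l2 H2]; exists (l1 ++ l2) => G HG; split.
      * apply: H1 => a h; apply: HG; apply List.in_or_app; by left.
      * apply: H2 => a h; apply: HG; apply List.in_or_app; by right.
    + move=> P Q PQ [l Hl]; exists l => G HG; apply: PQ; exact: Hl.
have [U [UU sFU]] := ultraFilterLemma FF.
exists U; split; [|split; [|split; [|split]]].
- by move=> P Q HP HQ; exact: (filterI HP HQ).
- by move=> P Q PQ HP; apply: filterS HP => x; apply: PQ.
- by move=> P; have := in_ultra_setVsetC P UU.
- move=> P HP; apply: Classical_Prop.NNPP => nP.
  apply: (@filter_not_empty _ U _); apply: filterS HP => x Px; apply: nP; by exists x.
- by move=> l; apply: sFU; exists l.
Qed.
End UF.

Definition sq {A : Type} (q : A -> A) (G : list A) (k : A) : A :=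
  if excluded_middle_informative (In k G) then q k else k.

Lemma Uext {A} (U : (list A -> Prop) -> Prop)
  (hI : forall P Q, U P -> U Q -> U (fun x => P x /\ Q x))
  (hS : forall P Q : list A -> Prop, (forall x, P x -> Q x) -> U P -> U Q)
  (l : list A) (hl : U (fun G => forall a, In a l -> In a G))
  (P Q : list A -> Prop) :
  (forall G, (forall a, In a l -> In a G) -> (P G <-> Q G)) -> (U P <-> U Q).
Proof.
  intros H; split; intro HP; eapply hS; [| apply (hI _ _ HP hl) | | apply (hI _ _ HP hl)];
  simpl; intros x [h1 h2]; apply (H x h2); auto.
Qed.

Lemma sq_repl {A} (q : A -> A) G i j : In i G -> In j G ->
  (fun k => sq q G (repl i j k)) = sq (fun k => q (repl i j k)) G.
Proof.
  intros hi hj; apply functional_extensionality; intro k; unfold sq, repl.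
  repeat match goal with |- context[excluded_middle_informative ?P] => destruct (excluded_middle_informative P) end; subst; try congruence; try contradiction.
Qed.

Lemma sq_swap {A} (q : A -> A) G i j : In i G -> In j G ->
  (fun k => sq q G (swap i j k)) = sq (fun k => q (swap i j k)) G.
Proof.
  intros hi hj; apply functional_extensionality; intro k; unfold sq, swap.
  repeat match goal with |- context[excluded_middle_informative ?P] => destruct (excluded_middle_informative P) end; subst; try congruence; try contradiction.
Qed.

Lemma sq_fs {A} (q : A -> A) G : fin_supp (sq q G).
Proof.
  exists G; intros i h; unfold sq in h.
  destruct (excluded_middle_informative (In i G)); auto; congruence.
Qed.

Lemma sq_id {A} (q : A -> A) l G : (forall i, q i <> i -> In i l) ->
  (forall a, In a l -> In a G) -> sq q G = q.
Proof.
  intros hq hG; apply functional_extensionality; intro k; unfold sq.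
  destruct (excluded_middle_informative (In k G)); auto.
  destruct (classic (q k = k)); auto. exfalso; auto.
Qed.

Theorem theorem4p26 (A : Type) (hA : infinite_type A)
  (B : ((A -> A) -> Prop) -> Prop) (hB : subalgebra (@fin_supp A) B) :
  exists (M : Type) (eps : A -> M),
    (forall x y, eps x = eps y -> x = y) /\
    exists (C : ((A -> M) -> Prop) -> Prop)
           (g : ((A -> A) -> Prop) -> ((A -> M) -> Prop)),
      subalgebra (fun _ : A -> M => True) C /\
      is_iso (@fin_supp A) (fun _ : A -> M => True) B C g /\
      forall X, B X -> forall q : A -> M,
        ((g X q /\ exists s, fin_supp s /\ q = (fun k => eps (s k))) <->
         (exists s, X s /\ q = (fun k => eps (s k)))).
Proof.
  destruct (UF.ultra_ex A) as [U [hI [hS [hC [hP hL]]]]].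
  destruct hB as [hB0 [hBI [hBC [hBR hBS]]]].
  set (g := fun (X : (A -> A) -> Prop) (q : A -> A) => U (fun G => X (sq q G))).
  assert (gV : forall X q, fin_supp q -> (g X q <-> X q)).
  { intros X q [l hl]. unfold g.
    assert (E : U (fun G => X (sq q G)) <-> U (fun _ => X q)).
    { apply (Uext U hI hS l (hL l)). intros G HG. rewrite (sq_id q l G hl HG). tauto. }
    rewrite E. split; intro h.
    - destruct (hP _ h); auto.
    - destruct (hC (fun _ => X q)) as [h'|h']; auto.
      destruct (hP _ h'); contradiction. }
  assert (gI : forall X Y, g (setI X Y) = setI (g X) (g Y)).
  { intros X Y; apply functional_extensionality; intro q;
    apply propositional_extensionality; unfold g, setI; split.
    - intro h; split; eapply hS; try apply h; simpl; tauto.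
    - intros [h1 h2]; apply (hI _ _ h1 h2). }
  assert (gC : forall X, g (setCrel fin_supp X) = setCrel (fun _ => True) (g X)).
  { intros X; apply functional_extensionality; intro q;
    apply propositional_extensionality; unfold g, setCrel; split.
    - intro h; split; auto. intro h2.
      destruct (hP _ (hI _ _ h h2)) as [x [[_ h3] h4]]; contradiction.
    - intros [_ h]. destruct (hC (fun G => X (sq q G))) as [h'|h']; [contradiction|].
      eapply hS; [|apply h']; simpl; intros x hx; split; auto. apply sq_fs. }
  assert (gR : forall i j X, g (Srepl fin_supp i j X) = Srepl (fun _ => True) i j (g X)).
  { intros i j X; apply functional_extensionality; intro q;
    apply propositional_extensionality; unfold g, Srepl.
    assert (E : U (fun G => fin_supp (sq q G) /\ X (fun k => sq q G (repl i j k))) <->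
                U (fun G => X (sq (fun k => q (repl i j k)) G))).
    { apply (Uext U hI hS (i :: j :: nil) (hL _)). intros G HG.
      rewrite sq_repl by (apply HG; simpl; auto). split; [tauto|]. intro; split; auto; apply sq_fs. }
    rewrite E; tauto. }
  assert (gS : forall i j X, g (Sswap fin_supp i j X) = Sswap (fun _ => True) i j (g X)).
  { intros i j X; apply functional_extensionality; intro q;
    apply propositional_extensionality; unfold g, Sswap.
    assert (E : U (fun G => fin_supp (sq q G) /\ X (fun k => sq q G (swap i j k))) <->
                U (fun G => X (sq (fun k => q (swap i j k)) G))).
    { apply (Uext U hI hS (i :: j :: nil) (hL _)). intros G HG.
      rewrite sq_swap by (apply HG; simpl; auto). split; [tauto|]. intro; split; auto; apply sq_fs. }
    rewrite E; tauto. }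
  assert (ginj : forall X Y, B X -> B Y -> g X = g Y -> X = Y).
  { intros X Y hX hY e. apply functional_extensionality; intro s;
    apply propositional_extensionality; split; intro h.
    - assert (fs : fin_supp s) by (exact (hB0 X hX s h)).
      apply (gV Y s fs); rewrite <- e; apply (gV X s fs); auto.
    - assert (fs : fin_supp s) by (exact (hB0 Y hY s h)).
      apply (gV X s fs); rewrite e; apply (gV Y s fs); auto. }
  exists A, (fun x => x). split; [auto|].
  exists (fun Y => exists X, B X /\ g X = Y), g.
  split; [|split].
  - split; [auto|]. split; [|split; [|split]].
    + intros _ _ [X [hX <-]] [Y [hY <-]]. exists (setI X Y); split; auto.
    + intros _ [X [hX <-]]. exists (setCrel fin_supp X); split; auto.
    + intros i j hij _ [X [hX <-]]. exists (Srepl fin_supp i j X); split; auto.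
    + intros i j hij _ [X [hX <-]]. exists (Sswap fin_supp i j X); split; auto.
  - split; [eauto|]. split; [auto|]. split; [auto|].
    split; [intros; apply gI|]. split; [intros; apply gC|].
    split; intros; [apply gR|apply gS].
  - intros X hX q. split.
    + intros [h [s [fs e]]]. subst q. exists s; split; auto. apply (gV X s fs); auto.
    + intros [s [h e]]. subst q. assert (fs : fin_supp s) by exact (hB0 X hX s h).
      split; [apply (gV X s fs); auto|]. exists s; auto.
Qed.
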